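(* Let $k$ be an algebraically closed field of characteristic $0$, $R=k[x,y]$, and let $L=(x^d,x^{d-1}y^{a_1},\dots,y^{a_d})$ with $0=a_0<a_1<\dots<a_d$ be a lex-segment ideal whose differences $b_i=a_i-a_{i-1}$ satisfy $b_i\le b_{i+1}$ for $i=1,\dots,d-1$. Let $\psi:R[T_0,\dots,T_d]\to\mathcal R(L)=R[Lt]$ be the $R$-algebra map with $\psi(T_i)=x^{d-i}y^{a_i}t$, and $H=\ker\psi$. Then the elements $$xT_i-y^{b_i}T_{i-1}\ (i=1,\dots,d),\qquad T_iT_{j-1}-y^{b_i-b_j}T_{i-1}T_j\ (d\ge i>j\ge1)$$ form a Gröbner basis of $H$ with respect to any term order on $k[x,y,T_0,\dots,T_d]$ for which the initial term of each listed element is the term written on the left. Moreover, $\mathcal R(L)$ is normal.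
   Context: $\mathcal R(L)=\bigoplus_{n\ge0}L^n$ is the Rees algebra, identified with $R[Lt]\subseteq R[t]$. *)

(* Defs.v *)
From HB Require Import structures.
From mathcomp Require Import all_boot all_order all_algebra.
From mathcomp Require Import fraction.
From mathcomp Require Import mpoly.
Unset Printing Implicit Defensive.
Import Order.TTheory GRing.Theory Num.Theory.
Local Open Scope ring_scope.

Definition term_order {n : nat} (le : rel 'X_{1..n}) : Prop :=
  [/\ (forall m1 m2, le m1 m2 || le m2 m1),
      antisymmetric le,
      transitive le,
      (forall m, le 0%MM m) &
      (forall m1 m2 m, le m1 m2 -> le (m1 + m)%MM (m2 + m)%MM)].

Definition ltT {n : nat} (le : rel 'X_{1..n}) (m1 m2 : 'X_{1..n}) : bool :=
  le m1 m2 && (m1 != m2).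

Definition is_lead {R : nzRingType} {n : nat} (le : rel 'X_{1..n})
  (p : {mpoly R[n]}) (m : 'X_{1..n}) : Prop :=
  m \in msupp p /\ forall m', m' \in msupp p -> le m' m.

Definition groebner_basis {R : nzRingType} {n : nat} (le : rel 'X_{1..n})
  (I G : {mpoly R[n]} -> Prop) : Prop :=
  (forall g, G g -> I g) /\
  (forall f, I f -> f != 0 ->
     exists g, G g /\ exists mf mg,
        [/\ is_lead le f mf, is_lead le g mg & lem mg mf]).

(* ---- Normality of a subring S of a domain A: S is integrally closed in
   its field of fractions (realised inside Frac(A)). ---- *)
Definition normal_subring {A : idomainType} (S : A -> Prop) : Prop :=
  forall z : {fraction A},
    (exists u v, [/\ S u, S v, v != 0 & z = (FracField.tofrac u) / (FracField.tofrac v)]) ->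
    (exists p : {poly {fraction A}},
        [/\ p \is monic, (forall i, exists s, S s /\ p`_i = (FracField.tofrac s)) & root p z]) ->
    exists s, S s /\ z = (FracField.tofrac s).

Section Setting.
Context {k : fieldType}.

Definition mvar (n i : nat) : {mpoly k[n.+1]} := 'X_(inord i).
Definition mmon (n i : nat) : 'X_{1..n.+1} := U_(inord i)%MM.

(* Source ring R[T_0..T_d] = k[x, y, T_0, ..., T_d] = k[X_0, ..., X_{d+2}]
   with x = X_0, y = X_1, T_i = X_{i+2}. *)
Definition vx (d : nat) := mvar d.+2 0.
Definition vy (d : nat) := mvar d.+2 1.
Definition vT (d i : nat) := mvar d.+2 i.+2.
Definition mx (d : nat) := mmon d.+2 0.
Definition my (d : nat) := mmon d.+2 1.
Definition mT (d i : nat) := mmon d.+2 i.+2.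

(* Target ring R[t] = k[x, y, t] = k[X_0, X_1, X_2]. *)
Definition tx := mvar 2 0.
Definition ty := mvar 2 1.
Definition tt := mvar 2 2.

Definition bdiff (a : nat -> nat) (i : nat) : nat := a i - a i.-1.

Definition psi_img (d : nat) (a : nat -> nat) (i : 'I_d.+3) : {mpoly k[3]} :=
  if (i : nat) == 0 then tx
  else if (i : nat) == 1 then ty
  else tx ^+ (d - (i - 2)) * ty ^+ (a (i - 2)) * tt.

Definition psi (d : nat) (a : nat -> nat) (p : {mpoly k[d.+3]}) : {mpoly k[3]} :=
  p \mPo [tuple psi_img d a i | i < d.+3].

Definition kerpsi (d : nat) (a : nat -> nat) (p : {mpoly k[d.+3]}) : Prop :=
  psi d a p = 0.

Definition rees (d : nat) (a : nat -> nat) (s : {mpoly k[3]}) : Prop :=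
  exists q, s = psi d a q.

Definition gensH (d : nat) (a : nat -> nat) (g : {mpoly k[d.+3]}) : Prop :=
  (exists i, [/\ (1 <= i)%N, (i <= d)%N &
      g = vx d * vT d i - vy d ^+ bdiff a i * vT d i.-1]) \/
  (exists i j, [/\ (1 <= j)%N, (j < i)%N, (i <= d)%N &
      g = vT d i * vT d j.-1
          - vy d ^+ (bdiff a i - bdiff a j) * vT d i.-1 * vT d j]).

End Setting.

(* Main.v *)
Require Import Defs.
From HB Require Import structures.
From mathcomp Require Import all_boot all_order all_algebra.
From mathcomp Require Import fraction.
From mathcomp Require Import mpoly.
From mathcomp Require Import zify ring.
From Stdlib Require Import Classical.
Import Order.TTheory GRing.Theory Num.Theory.
Local Open Scope ring_scope.

Lemma ordsub2 d (i : 'I_d.+3) : (2 <= i)%N -> nat_of_ord (i - 2%:R) = (i - 2)%N.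
Proof.
move=> h /=.
rewrite !(@modn_small 1) // (@modn_small 2) // (@modn_small (d.+3 - 2)) //.
have -> : (i + (d.+3 - 2))%N = ((i - 2) + d.+3)%N by lia.
rewrite modnDr modn_small //; have := ltn_ord i; lia.
Qed.

Section Mon.
Context {k : fieldType} (d : nat) (a : nat -> nat).

Definition ix (i : nat) : nat := if i == 0%N then 1%N else if i == 1%N then 0%N else (d - (i - 2))%N.
Definition iy (i : nat) : nat := if i == 0%N then 0%N else if i == 1%N then 1%N else a (i - 2).
Definition iD (i : nat) : nat := if (i < 2)%N then 0%N else 1%N.

Definition u3 (j : nat) : 'X_{1..3} := U_(inord j)%MM.

Definition img (i : 'I_d.+3) : 'X_{1..3} :=
  (u3 0 *+ ix i + u3 1 *+ iy i + u3 2 *+ iD i)%MM.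

Lemma psi_imgE i : psi_img (k:=k) d a i = 'X_[img i].
Proof.
rewrite /img !mpolyXD -!mpolyXn /psi_img /ix /iy /iD /tx /ty /tt /mvar /u3.
case: ifP => [/eqP->|h0] /=; first by rewrite !expr0 !mulr1 expr1.
case: ifP => [/eqP->|h1] /=; first by rewrite !expr0 mulr1 mul1r expr1.
have h2 : (2 <= i)%N by move: h0 h1; case: (i : nat) => [|[|]].
rewrite (_ : (i < 2)%N = false) ?expr1; last by case: (i: nat) h2 => [|[|]].
by rewrite -ordsub2.
Qed.

Definition phi (m : 'X_{1..d.+3}) : 'X_{1..3} := (\sum_(i < d.+3) img i *+ m i)%MM.

Lemma psiX m : psi (k:=k) d a 'X_[m] = 'X_[phi m].
Proof.
rewrite /psi comp_mpolyX /phi.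
rewrite (big_morph (fun m : 'X_{1..3} => 'X_[k, m]) (@mpolyXD _ _) (@mpolyX0 _ _)).
apply: eq_bigr => i _; by rewrite tnth_mktuple psi_imgE mpolyXn.
Qed.

End Mon.

Lemma sum_split3 d (F : 'I_d.+3 -> nat) :
  (\sum_(i < d.+3) F i = F (inord 0) + F (inord 1) + \sum_(j < d.+1) F (inord j.+2))%N.
Proof.
rewrite big_ord_recl big_ord_recl addnA; f_equal; [f_equal|];
  try (congr F; apply/val_inj; rewrite /= inordK //).
apply: eq_bigr => j _; f_equal; apply/val_inj; rewrite /= inordK /bump /= ?add1n; [reflexivity| exact: (ltn_ord j)].
Qed.

Lemma u3E (j l : nat) : (j < 3)%N -> (l < 3)%N -> u3 j (inord l) = (j == l) :> nat.
Proof. by move=> hj hl; rewrite /u3 mnm1E; congr nat_of_bool; apply/eqP/eqP => [/(congr1 val)|->//]; rewrite /= !inordK. Qed.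

Lemma inordK2 d (j : 'I_d.+1) : nat_of_ord (inord j.+2 : 'I_d.+3) = j.+2.
Proof. by rewrite inordK //; exact: (ltn_ord j). Qed.

Section Coords.
Context (d : nat) (a : nat -> nat).

Definition E (m : 'X_{1..d.+3}) (j : nat) : nat := m (inord j.+2).

Lemma phiE m (l : nat) : (l < 3)%N ->
  phi d a m (inord l) = (\sum_(i < d.+3) img d a i (inord l) * m i)%N.
Proof. by move=> _; rewrite /phi mnm_sumE; apply: eq_bigr => i _; rewrite mulmnE. Qed.

Lemma img0 i : img d a i (inord 0) = ix d i.
Proof. rewrite /img !mnmDE !mulmnE !u3E //=; lia. Qed.
Lemma img1 i : img d a i (inord 1) = iy a i.
Proof. rewrite /img !mnmDE !mulmnE !u3E //=; lia. Qed.
Lemma img2 i : img d a i (inord 2) = iD i.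
Proof. rewrite /img !mnmDE !mulmnE !u3E //=; lia. Qed.

Lemma phiX m : phi d a m (inord 0) = (m (inord 0) + \sum_(j < d.+1) (d - j) * E m j)%N.
Proof.
rewrite phiE // sum_split3 !img0 /ix !inordK //= mul1n mul0n addn0.
congr (_ + _)%N; apply: eq_bigr => j _; rewrite img0 /ix inordK2 /=.
by rewrite subn2.
Qed.

Lemma phiY m : phi d a m (inord 1) = (m (inord 1) + \sum_(j < d.+1) a j * E m j)%N.
Proof.
rewrite phiE // sum_split3 !img1 /iy !inordK //= mul1n mul0n add0n.
congr (_ + _)%N; apply: eq_bigr => j _; rewrite img1 /iy inordK2 /=.
by rewrite subn2.
Qed.

Lemma phiD m : phi d a m (inord 2) = (\sum_(j < d.+1) E m j)%N.
Proof.
rewrite phiE // sum_split3 !img2 /iD !inordK //= mul0n add0n.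
apply: eq_bigr => j _; rewrite img2 /iD inordK2 /=.
by rewrite mul1n.
Qed.

Lemma mnm3P (M M' : 'X_{1..3}) :
  M (inord 0) = M' (inord 0) -> M (inord 1) = M' (inord 1) -> M (inord 2) = M' (inord 2) -> M = M'.
Proof.
move=> h0 h1 h2; apply/mnmP => i.
have -> : i = inord i by rewrite inord_val.
by case: i => [[|[|[|]]] ?].
Qed.

End Coords.

Section PhiAlg.
Context (d : nat) (a : nat -> nat).

Lemma phiE' m (l : 'I_3) : phi d a m l = (\sum_(i < d.+3) img d a i l * m i)%N.
Proof. by rewrite /phi mnm_sumE; apply: eq_bigr => i _; rewrite mulmnE. Qed.

Lemma phi_add m1 m2 : phi d a (m1 + m2)%MM = (phi d a m1 + phi d a m2)%MM.
Proof.
apply/mnmP => l; rewrite mnmDE !phiE' -big_split /=.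
by apply: eq_bigr => i _; rewrite mnmDE mulnDr.
Qed.

Lemma phi_muln m b : phi d a (m *+ b)%MM = (phi d a m *+ b)%MM.
Proof.
apply/mnmP => l; rewrite mulmnE !phiE' big_distrl /=.
by apply: eq_bigr => i _; rewrite mulmnE mulnA.
Qed.

Lemma phi_U (i : 'I_d.+3) : phi d a U_(i)%MM = img d a i.
Proof.
apply/mnmP => l; rewrite phiE' (bigD1 i) //= mnm1E eqxx muln1 big1 ?addn0 //.
by move=> j /negbTE hj; rewrite mnm1E eq_sym hj muln0.
Qed.

Lemma phi0 : phi d a 0%MM = 0%MM.
Proof. by apply/mnmP => l; rewrite phiE' mnm0E big1 // => i _; rewrite mnm0E muln0. Qed.

Lemma img_x j : (j <= d)%N -> img d a (inord j.+2) = (u3 0 *+ (d - j) + u3 1 *+ a j + u3 2)%MM.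
Proof.
move=> hj; apply: mnm3P; rewrite ?img0 ?img1 ?img2 /ix /iy /iD inordK ?ltnS //= ?subn2;
 rewrite !mnmDE !mulmnE !u3E //=; lia.
Qed.
Lemma img_0 : img d a (inord 0) = u3 0.
Proof. apply: mnm3P; rewrite ?img0 ?img1 ?img2 /ix /iy /iD inordK //= !u3E //. Qed.
Lemma img_1 : img d a (inord 1) = u3 1.
Proof. apply: mnm3P; rewrite ?img0 ?img1 ?img2 /ix /iy /iD inordK //= !u3E //. Qed.

End PhiAlg.

Section Arith.
Context (d : nat) (a : nat -> nat).
Hypothesis ha : forall i, (i < d)%N -> (a i < a i.+1)%N.
Hypothesis hb : forall i, (1 <= i)%N -> (i < d)%N -> (bdiff a i <= bdiff a i.+1)%N.

Lemma a_step i : (1 <= i <= d)%N -> a i = (a i.-1 + bdiff a i)%N.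
Proof.
case: i => [//|i] /andP[_ hi]; rewrite /bdiff /=.
have := ha i hi; lia.
Qed.

Lemma bmono j i : (1 <= j)%N -> (j <= i)%N -> (i <= d)%N -> (bdiff a j <= bdiff a i)%N.
Proof.
move=> hj; elim: i => [|i IH] hji hid; first by lia.
case: (ltngtP j i.+1) hji => // [hlt|->] _; last by [].
apply: leq_trans (IH _ _) (hb _ _ _); lia.
Qed.

Lemma convex_lo i t : (1 <= i <= d)%N -> (t <= i)%N ->
  (a i <= a (i - t) + t * bdiff a i)%N.
Proof.
move=> hi; elim: t => [|t IH] ht; first by rewrite subn0; lia.
have h1 := IH (ltnW ht).
have h2 := a_step (i - t) ltac:(lia).
have h3 := bmono (i - t) i ltac:(lia) ltac:(lia) ltac:(lia).
have -> : (i - t.+1 = (i - t).-1)%N by lia.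
lia.
Qed.

Lemma convex_hi i t : (1 <= i <= d)%N -> (i + t <= d)%N ->
  (a i + t * bdiff a i <= a (i + t))%N.
Proof.
move=> hi; elim: t => [|t IH] ht; first by rewrite addn0; lia.
have h1 := IH ltac:(lia).
have h2 := a_step (i + t.+1) ltac:(lia).
have h3 := bmono i (i + t.+1) ltac:(lia) ltac:(lia) ltac:(lia).
rewrite /= addnS /= in h2 h3 *.
lia.
Qed.

Lemma convex i j : (1 <= i <= d)%N -> (j <= d)%N ->
  (bdiff a i * (d - i) + a i <= bdiff a i * (d - j) + a j)%N.
Proof.
move=> hi hj; case: (leqP j i) => hji.
- have := convex_lo i (i - j) hi ltac:(lia).
  rewrite (_ : (i - (i - j) = j)%N); last by lia.
  move=> h.
  have -> : (d - j = (d - i) + (i - j))%N by lia.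
  rewrite mulnDr; lia.
- have := convex_hi i (j - i) hi ltac:(lia).
  rewrite (_ : (i + (j - i) = j)%N); last by lia.
  move=> h.
  have -> : (d - i = (d - j) + (j - i))%N by lia.
  rewrite mulnDr; lia.
Qed.

Lemma phiL1 i : (1 <= i <= d)%N ->
  phi d a (mx d + mT d i)%MM = phi d a (my d *+ bdiff a i + mT d i.-1)%MM.
Proof.
move=> hi; rewrite /mx /mT /my /mmon !phi_add phi_muln !phi_U img_0 img_1 !img_x; try lia.
have h := a_step i hi.
apply: mnm3P; rewrite !mnmDE !mulmnE !u3E //=; lia.
Qed.

Lemma phiL2 i j : (1 <= j)%N -> (j < i)%N -> (i <= d)%N ->
  phi d a (mT d i + mT d j.-1)%MM =
  phi d a (my d *+ (bdiff a i - bdiff a j) + mT d i.-1 + mT d j)%MM.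
Proof.
move=> hj hji hid; rewrite /mx /mT /my /mmon !phi_add phi_muln !phi_U img_1 !img_x; try lia.
have h1 := a_step i ltac:(lia).
have h2 := a_step j ltac:(lia).
have h3 := bmono j i hj ltac:(lia) hid.
apply: mnm3P; rewrite !mnmDE !mulmnE !u3E //=; lia.
Qed.

End Arith.

Section P5sec.
Local Open Scope nat_scope.

Lemma sum_pick n (j0 : nat) (g : nat -> nat) :
  (\sum_(j < n) ((j : nat) == j0) * g j = if (j0 < n) then g j0 else 0)%N.
Proof.
elim: n => [|n IH]; first by rewrite big_ord0.
rewrite big_ord_recr /= IH.
case: (eqVneq j0 n) => [->|hne] /=; first by rewrite ltnn ltnSn mul1n add0n.
rewrite mul0n addn0; congr (if _ then _ else _); move/eqP: hne => hne; apply/idP/idP; lia.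
Qed.

Section Shape.
Context (d : nat) (e : nat -> nat).
Hypothesis spread : forall p q, (q.+2 <= p)%N -> (p <= d)%N -> e p = 0%N \/ e q = 0%N.

Let D := (\sum_(j < d.+1) e j)%N.
Let W := (\sum_(j < d.+1) (d - j) * e j)%N.

Lemma shape : (0 < D)%N -> exists c r, [/\ (c <= d)%N, (r < D)%N, (W + r = (d - c) * D)%N &
   forall j : nat, (j <= d)%N -> e j = ((j == c) * (D - r) + (j == c.+1) * r)%N].
Proof.
move=> hD.
have ex : exists j, (j <= d)%N && (0 < e j)%N.
  case: (boolP [exists j : 'I_d.+1, 0 < e j]%N) => [/existsP [j hj]|].
    by exists j; rewrite hj -ltnS ltn_ord.
  rewrite negb_exists => /forallP hall.
  move: hD; rewrite /D big1 // => j _; have := hall j; by case: (e j).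
case: (ex_minnP ex) => c /andP[hcd hc] hmin.
have cmin : forall j, (j < c)%N -> e j = 0%N.
  move=> j hj; case: (posnP (e j)) => // hpos.
  have := hmin j; rewrite hpos andbT; move: hj; lia.
pose r := if (c < d)%N then e c.+1 else 0%N.
have hej : forall j : nat, (j <= d)%N -> e j = ((j == c) * e c + (j == c.+1) * r)%N.
  move=> j hj; case: (ltngtP j c) => [hjc|hjc|->]; last by lia.
  - rewrite cmin //; lia.
  - case: (eqVneq j c.+1) => [->|hne].
      by rewrite /r (_ : (c < d)%N = true); lia.
    have hj2 : (c.+2 <= j)%N by move/eqP: hne; lia.
    case: (spread j c hj2 hj) => h0; lia.
have hD' : D = (e c + r)%N.
  rewrite /D (eq_bigr (fun j : 'I_d.+1 => ((j : nat) == c) * e c + ((j : nat) == c.+1) * r))%N; last first.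
    by move=> j _; apply: hej; rewrite -ltnS ltn_ord.
  rewrite big_split /= !(sum_pick d.+1 _ (fun _ => _)) ltnS hcd ltnS.
  by rewrite /r; case: ltnP.
have hW' : W = ((d - c) * e c + (d - c.+1) * r)%N.
  rewrite /W (eq_bigr (fun j : 'I_d.+1 => ((j : nat) == c) * ((d - j) * e c) + ((j : nat) == c.+1) * ((d - j) * r)))%N; last first.
    move=> j _; rewrite hej; last by rewrite -ltnS ltn_ord.
    by case: eqP => _; case: eqP => _; lia.
  rewrite big_split /= (sum_pick d.+1 c (fun j => (d - j) * e c)%N) (sum_pick d.+1 c.+1 (fun j => (d - j) * r)%N).
  by rewrite ltnS hcd ltnS /r; case: ltnP => h; lia.
exists c, r; split => //.
- by rewrite hD'; lia.
- rewrite hW' hD' mulnDr; case: (posnP r) => [->|hr]; first by lia.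
  have hcd' : (c < d)%N. case: (ltnP c d) hr => // h; rewrite /r. rewrite (_ : (c < d)%N = false) //; lia. 
  have -> : (d - c = (d - c.+1).+1)%N by lia.
  lia.
- move=> j hj; rewrite hej // hD'; congr (_ * _ + _)%N; lia.
Qed.
End Shape.

Lemma sum_le_dD d (e : nat -> nat) :
  (\sum_(j < d.+1) (d - j) * e j <= d * \sum_(j < d.+1) e j)%N.
Proof. rewrite big_distrr /=; apply: leq_sum => j _; rewrite leq_mul2r leq_subr orbT //. Qed.

Lemma term_le_sum d (e : nat -> nat) j : (j <= d)%N -> (e j <= \sum_(i < d.+1) e i)%N.
Proof.
move=> hj; rewrite (bigD1 (Ordinal (hj : (j < d.+1)%N))) //=; exact: leq_addr.
Qed.

Lemma diff_mul_lt s s' D r r' W : (s' < s)%N -> (r < D)%N -> (W + r = s * D)%N -> (W + r' = s' * D)%N -> False.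
Proof.
move=> hs hr h1 h2.
have : ((s'.+1) * D <= s * D)%N by rewrite leq_mul2r hs orbT.
rewrite mulSn; lia.
Qed.

Lemma std_unique d (e e' : nat -> nat) (x x' : nat) :
  (forall p q, (q.+2 <= p)%N -> (p <= d)%N -> e p = 0%N \/ e q = 0%N) ->
  (forall p q, (q.+2 <= p)%N -> (p <= d)%N -> e' p = 0%N \/ e' q = 0%N) ->
  ((0 < x)%N -> forall j, (1 <= j <= d)%N -> e j = 0%N) ->
  ((0 < x')%N -> forall j, (1 <= j <= d)%N -> e' j = 0%N) ->
  (x + \sum_(j < d.+1) (d - j) * e j = x' + \sum_(j < d.+1) (d - j) * e' j)%N ->
  (\sum_(j < d.+1) e j = \sum_(j < d.+1) e' j)%N ->
  x = x' /\ forall j, (j <= d)%N -> e j = e' j.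
Proof.
move=> sp sp' hx hx' hX hD.
have Wx : forall (f : nat -> nat) y, ((0 < y)%N -> forall j, (1 <= j <= d)%N -> f j = 0%N) -> (0 < y)%N ->
    (\sum_(j < d.+1) (d - j) * f j = d * \sum_(j < d.+1) f j)%N.
  move=> f y hf hy; rewrite big_distrr /=; apply: eq_bigr => j _.
  case: (posnP j) => [->|hj]; first by rewrite subn0.
  rewrite (hf hy j) ?muln0 //; rewrite hj -ltnS ltn_ord //.
have le1 := sum_le_dD d e; have le2 := sum_le_dD d e'.
have [hxx hWW] : x = x' /\ (\sum_(j < d.+1) (d - j) * e j = \sum_(j < d.+1) (d - j) * e' j)%N.
  case: (posnP x) => [x0|xp]; case: (posnP x') => [x0'|xp'].
  - by subst; split.
  - rewrite (Wx e' x' hx' xp') -hD x0 in hX; lia.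
  - rewrite (Wx e x hx xp) hD x0' in hX; lia.
  - rewrite (Wx e' x' hx' xp') (Wx e x hx xp) hD in hX *; lia.
split => //.
case: (posnP (\sum_(j < d.+1) e j)) => [D0|Dp].
  move=> j hj; have := term_le_sum d e j hj; have := term_le_sum d e' j hj; lia.
have [c [r [hc hr hW hE]]] := shape d e sp Dp.
have [c' [r' [hc' hr' hW' hE']]] := shape d e' sp' (ltac:(lia) : (0 < \sum_(j < d.+1) e' j)%N).
rewrite -hD -hWW in hr' hW'.
have hcc : c = c'.
  case: (ltngtP c c') => // hlt; exfalso.
  - apply: (diff_mul_lt (d - c) (d - c') _ r r' _ _ hr hW hW'); lia.
  - apply: (diff_mul_lt (d - c') (d - c) _ r' r _ _ hr' hW' hW); lia.
subst c'.
have hrr : r = r' by lia.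
subst r'.
by move=> j hj; rewrite hE // hE' // hD.
Qed.

End P5sec.

Lemma lem_UU n (i j : 'I_n) (m : 'X_{1..n}) : i != j -> (0 < m i)%N -> (0 < m j)%N ->
  (U_(i) + U_(j) <= m)%MM.
Proof.
move=> hij hi hj; apply/mnm_lepP => l; rewrite mnmDE !mnm1E.
case: (eqVneq i l) => [<-|hil]; first by rewrite eq_sym (negbTE hij) /=; lia.
case: (eqVneq j l) => [<-|hjl] /=; lia.
Qed.

Lemma lem_UU_pos n (i j : 'I_n) (m : 'X_{1..n}) : (U_(i) + U_(j) <= m)%MM -> (0 < m i)%N /\ (0 < m j)%N.
Proof.
move/mnm_lepP => h; split.
- by have := h i; rewrite mnmDE !mnm1E eqxx; lia.
- by have := h j; rewrite mnmDE !mnm1E eqxx; lia.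
Qed.

Lemma inord_neq d (p q : nat) : (p <= d.+2)%N -> (q <= d.+2)%N -> p != q -> (inord p : 'I_d.+3) != inord q.
Proof. by move=> hp hq hpq; apply/eqP => /(congr1 val); rewrite /= !inordK //; apply/eqP. Qed.

Section Std.
Context (d : nat) (a : nat -> nat).

Definition lead_div (m : 'X_{1..d.+3}) : Prop :=
  (exists i, [/\ (1 <= i)%N, (i <= d)%N & (mx d + mT d i <= m)%MM]) \/
  (exists i j, [/\ (1 <= j)%N, (j < i)%N, (i <= d)%N & (mT d i + mT d j.-1 <= m)%MM]).

Lemma std_spread m : ~ lead_div m ->
  forall p q, (q.+2 <= p)%N -> (p <= d)%N -> E d m p = 0%N \/ E d m q = 0%N.
Proof.
move=> hs p q hpq hp; case: (posnP (E d m p)) => [|hp0]; first by left.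
case: (posnP (E d m q)) => [|hq0]; first by right.
exfalso; apply: hs; right; exists p, q.+1; split; try lia.
apply: lem_UU => //; apply: inord_neq; lia.
Qed.

Lemma std_x m : ~ lead_div m -> (0 < m (inord 0))%N ->
  forall j, (1 <= j <= d)%N -> E d m j = 0%N.
Proof.
move=> hs hx j /andP[h1 h2]; case: (posnP (E d m j)) => // hj; exfalso.
apply: hs; left; exists j; split => //.
apply: lem_UU => //; apply: inord_neq; lia.
Qed.

Lemma std_unique_m m1 m2 : ~ lead_div m1 -> ~ lead_div m2 -> phi d a m1 = phi d a m2 -> m1 = m2.
Proof.
move=> h1 h2 he.
have eX := congr1 (fun M : 'X_{1..3} => M (inord 0)) he.
have eY := congr1 (fun M : 'X_{1..3} => M (inord 1)) he.
have eD := congr1 (fun M : 'X_{1..3} => M (inord 2)) he.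
rewrite /= !phiX in eX; rewrite /= !phiY in eY; rewrite /= !phiD in eD.
have [hx hE] := std_unique d (E d m1) (E d m2) _ _ (std_spread m1 h1) (std_spread m2 h2)
   (std_x m1 h1) (std_x m2 h2) eX eD.
have hY : m1 (inord 1) = m2 (inord 1).
  suff : (\sum_(j < d.+1) a j * E d m1 j = \sum_(j < d.+1) a j * E d m2 j)%N by lia.
  by apply: eq_bigr => j _; rewrite hE // -ltnS ltn_ord.
apply/mnmP => i; rewrite -(inord_val i).
case: i => [[|[|j]] hi] //=.
by have := hE j; rewrite /E; apply; move: hi; rewrite !ltnS.
Qed.

Definition wgt (i : nat) : nat := if i == 0%N then 1%N else if i == 1%N then 0%N else ((i - 1) ^ 2)%N.
Definition mu (m : 'X_{1..d.+3}) : nat := (\sum_(i < d.+3) wgt i * m i)%N.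

Lemma mu_add m1 m2 : mu (m1 + m2)%MM = (mu m1 + mu m2)%N.
Proof. by rewrite /mu -big_split; apply: eq_bigr => i _; rewrite mnmDE mulnDr. Qed.
Lemma mu_muln m b : mu (m *+ b)%MM = (mu m * b)%N.
Proof. by rewrite /mu big_distrl; apply: eq_bigr => i _; rewrite mulmnE mulnA. Qed.
Lemma mu_U (l : nat) : (l < d.+3)%N -> mu U_(inord l)%MM = wgt l.
Proof.
move=> hl; rewrite /mu (bigD1 (inord l)) //= mnm1E eqxx muln1 big1 ?addn0 ?inordK //.
by move=> j /negbTE hj; rewrite mnm1E eq_sym hj muln0.
Qed.

End Std.

Section Groeb.
Context {k : fieldType} (d : nat) (a : nat -> nat).
Hypothesis ha : forall i, (i < d)%N -> (a i < a i.+1)%N.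
Hypothesis hb : forall i, (1 <= i)%N -> (i < d)%N -> (bdiff a i <= bdiff a i.+1)%N.
Context (le : rel 'X_{1..d.+3}) (hle : term_order le).
Hypothesis hin1 : forall i, (1 <= i)%N -> (i <= d)%N ->
     ltT le (my d *+ bdiff a i + mT d i.-1)%MM (mx d + mT d i)%MM.
Hypothesis hin2 : forall i j, (1 <= j)%N -> (j < i)%N -> (i <= d)%N ->
     ltT le (my d *+ (bdiff a i - bdiff a j) + mT d i.-1 + mT d j)%MM
            (mT d i + mT d j.-1)%MM.

Lemma tle_refl m : le m m.
Proof. by case: hle => tot _ _ _ _; have := tot m m; rewrite orbb. Qed.
Lemma tle_trans m1 m2 m3 : le m1 m2 -> le m2 m3 -> le m1 m3.
Proof. by case: hle => _ _ tr _ _ h1 h2; apply: tr h2. Qed.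
Lemma tle_anti m1 m2 : le m1 m2 -> le m2 m1 -> m1 = m2.
Proof. by case: hle => _ an _ _ _ h1 h2; apply: an; rewrite h1 h2. Qed.
Lemma tle_total m1 m2 : le m1 m2 || le m2 m1.
Proof. by case: hle. Qed.
Lemma tle_add m1 m2 m : le m1 m2 -> le (m1 + m)%MM (m2 + m)%MM.
Proof. by case: hle => _ _ _ _ h; apply: h. Qed.

Lemma reduce_std : forall m, exists m0, [/\ ~ lead_div d m0, phi d a m0 = phi d a m & le m0 m].
Proof.
suff H : forall N m, (mu d m < N)%N -> exists m0, [/\ ~ lead_div d m0, phi d a m0 = phi d a m & le m0 m].
  by move=> m; apply: (H (mu d m).+1).
elim => [//|N IH] m hmN.
case: (classic (lead_div d m)) => [hl|hs]; last by exists m; split => //; apply: tle_refl.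
have step : forall L T, (L <= m)%MM -> phi d a L = phi d a T -> ltT le T L -> (mu d T < mu d L)%N ->
    exists m0, [/\ ~ lead_div d m0, phi d a m0 = phi d a m & le m0 m].
  move=> L T hLm hphi hlt hmu.
  pose m' := (T + (m - L))%MM.
  have hm : m = (L + (m - L))%MM by rewrite addmC submK.
  have [|m0 [h1 h2 h3]] := IH m'.
    move: hmN; rewrite hm /m' !mu_add; lia.
  exists m0; split => //.
  - by rewrite h2 /m' phi_add -hphi -phi_add -hm.
  - apply: tle_trans h3 _; rewrite /m' {2}hm; apply: tle_add.
    by case/andP: hlt.
case: hl => [[i [h1 h2 hL]]|[i [j [h1 h2 h3 hL]]]].
- apply: (step _ _ hL (phiL1 d a ha i ltac:(lia)) (hin1 i h1 h2)).
  rewrite /mx /my /mT /mmon !mu_add mu_muln !mu_U; try lia.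
  rewrite /wgt /=; case: i h1 h2 {hL} => [//|i] _ _ /=.
  rewrite subn1 /=; lia.
- apply: (step _ _ hL (phiL2 d a ha hb i j h1 h2 h3) (hin2 i j h1 h2 h3)).
  rewrite /mx /my /mT /mmon !mu_add mu_muln !mu_U; try lia.
  rewrite /wgt /=; case: i h2 h3 {hL} => [//|i] h2 h3 /=; case: j h1 h2 => [//|j] _ h2 /=.
rewrite !subn1 /= !expnS !expn0; nia.
Qed.

End Groeb.

Section Groeb2.
Context {k : fieldType} (d : nat) (a : nat -> nat).
Hypothesis ha : forall i, (i < d)%N -> (a i < a i.+1)%N.
Hypothesis hb : forall i, (1 <= i)%N -> (i < d)%N -> (bdiff a i <= bdiff a i.+1)%N.
Context (le : rel 'X_{1..d.+3}) (hle : term_order le).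
Hypothesis hin1 : forall i, (1 <= i)%N -> (i <= d)%N ->
     ltT le (my d *+ bdiff a i + mT d i.-1)%MM (mx d + mT d i)%MM.
Hypothesis hin2 : forall i j, (1 <= j)%N -> (j < i)%N -> (i <= d)%N ->
     ltT le (my d *+ (bdiff a i - bdiff a j) + mT d i.-1 + mT d j)%MM
            (mT d i + mT d j.-1)%MM.

Lemma psi_bin (L T : 'X_{1..d.+3}) :
  psi (k:=k) d a ('X_[L] - 'X_[T]) = 'X_[phi d a L] - 'X_[phi d a T].
Proof. by rewrite /psi comp_mpolyB -!/(psi d a _) !psiX. Qed.

Lemma gen1E i b : vx (k:=k) d * vT d i - vy d ^+ b * vT d i.-1 =
   'X_[mx d + mT d i] - 'X_[my d *+ b + mT d i.-1].
Proof. by rewrite !mpolyXD mpolyXn. Qed.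

Lemma gen2E i j b : vT (k:=k) d i * vT d j.-1 - vy d ^+ b * vT d i.-1 * vT d j =
   'X_[mT d i + mT d j.-1] - 'X_[my d *+ b + mT d i.-1 + mT d j].
Proof. by rewrite !mpolyXD mpolyXn. Qed.

Lemma bin_coef (L T m : 'X_{1..d.+3}) :
  ('X_[L] - 'X_[T] : {mpoly k[d.+3]})@_m = (L == m)%:R - (T == m)%:R.
Proof. by rewrite mcoeffB !mcoeffX. Qed.

Lemma is_lead_bin (L T : 'X_{1..d.+3}) : ltT le T L ->
  is_lead le ('X_[L] - 'X_[T] : {mpoly k[d.+3]}) L.
Proof.
case/andP => hTL hne; split.
- rewrite mcoeff_msupp bin_coef eqxx (negbTE hne) subr0; exact: oner_neq0.
- move=> m'; rewrite mcoeff_msupp bin_coef.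
  case: (eqVneq L m') => [->|_]; first by move=> _; apply: (tle_refl d le hle).
  case: (eqVneq T m') => [<-//|_]; by rewrite subrr eqxx.
Qed.

Lemma exists_max (s : seq 'X_{1..d.+3}) : s != [::] -> exists2 x, x \in s & forall y, y \in s -> le y x.
Proof.
elim: s => [//|x s IH] _.
case: (eqVneq s [::]) => [->|hs].
  by exists x; rewrite ?inE ?eqxx // => y; rewrite inE => /eqP ->; apply: (tle_refl d le hle).
have [z hz hmax] := IH hs.
case/orP: (tle_total d le hle x z) => hxz.
- exists z; first by rewrite inE hz orbT.
  move=> y; rewrite inE => /orP[/eqP->//|]; exact: hmax.
- exists x; first by rewrite inE eqxx.
  move=> y; rewrite inE => /orP[/eqP->|/hmax hy]; first by apply: (tle_refl d le hle).
  exact: (tle_trans d le hle _ _ _ hy hxz).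
Qed.

Lemma psiE (f : {mpoly k[d.+3]}) :
  psi d a f = \sum_(m <- msupp f) f@_m *: 'X_[phi d a m].
Proof.
rewrite /psi comp_mpolyEX; apply: eq_bigr => m _.
by rewrite -/(psi d a _) psiX.
Qed.

Lemma fiber_other (f : {mpoly k[d.+3]}) mf : kerpsi d a f -> mf \in msupp f ->
  exists m', [/\ m' \in msupp f, m' != mf & phi d a m' = phi d a mf].
Proof.
move=> hk hmf.
case: (boolP (has (fun m => (m != mf) && (phi d a m == phi d a mf)) (msupp f))).
  by case/hasP => m hm /andP[h1 /eqP h2]; exists m.
move/hasPn => hno; exfalso.
have := congr1 (mcoeff (phi d a mf)) hk; rewrite psiE mcoeff0 raddf_sum /=.
rewrite (bigD1_seq mf) ?msupp_uniq //= big1_seq ?addr0.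
- by rewrite mcoeffZ mcoeffX eqxx mulr1 => /eqP; rewrite mcoeff_eq0 hmf.
- move=> m /andP[hne hm]; rewrite mcoeffZ mcoeffX.
  case: (eqVneq (phi d a m) (phi d a mf)) => [he|]; last by rewrite mulr0.
  by have := hno m hm; rewrite hne he eqxx.
Qed.

Lemma groebner_main : groebner_basis le (kerpsi (k:=k) d a) (gensH (k:=k) d a).
Proof.
split.
- move=> g [[i [h1 h2 ->]]|[i [j [h1 h2 h3 ->]]]].
  + by rewrite /kerpsi gen1E psi_bin (phiL1 d a ha i) ?subrr //; lia.
  + by rewrite /kerpsi gen2E psi_bin (phiL2 d a ha hb i j) ?subrr.
- move=> f hf fnz.
  have hs : msupp f != [::] by rewrite msupp_eq0.
  have [mf hmf hmax] := exists_max _ hs.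
  have [m' [hm' hne hphi]] := fiber_other f mf hf hmf.
  have hld : lead_div d mf.
    apply: NNPP => hstd.
    have [m0 [h0 h0phi h0le]] := reduce_std d a ha hb le hle hin1 hin2 m'.
    have e0 : m0 = mf by apply: (std_unique_m d a) => //; rewrite h0phi.
    subst m0.
    by move: hne; rewrite (tle_anti d le hle _ _ (hmax _ hm') h0le) eqxx.
  have fl : is_lead le f mf by split.
  case: hld => [[i [h1 h2 hL]]|[i [j [h1 h2 h3 hL]]]].
  + exists (vx d * vT d i - vy d ^+ bdiff a i * vT d i.-1); split.
      by left; exists i.
    exists mf, (mx d + mT d i)%MM; split => //.
    by rewrite gen1E; apply: is_lead_bin; apply: hin1.
  + exists (vT d i * vT d j.-1 - vy d ^+ (bdiff a i - bdiff a j) * vT d i.-1 * vT d j); split.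
      by right; exists i, j.
    exists mf, (mT d i + mT d j.-1)%MM; split => //.
    by rewrite gen2E; apply: is_lead_bin; apply: hin2.
Qed.

End Groeb2.

Section IntClosed.
Context {k : fieldType} (n : nat).
Local Notation A := {mpoly k[n]}.
Local Notation tf := (@FracField.tofrac A).

Lemma fld_aux (F : fieldType) (a b c X : F) : X != 0 -> b * c * a = a * X * (b * (c / X)).
Proof. move=> hX; field. exact hX. Qed.

Lemma tf_inj : injective tf.
Proof. by move=> x y /eqP; rewrite tofrac_eq => /eqP. Qed.

Definition hom (N : nat) (u v : A) (r : {poly A}) : A :=
  \sum_(i < size r) r`_i * u ^+ i * v ^+ (N - i).

Lemma homE (N : nat) (u v : A) (r : {poly A}) : v != 0 -> (size r <= N.+1)%N ->
  tf (hom N u v r) = tf v ^+ N * (map_poly tf r).[tf u / tf v].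
Proof.
move=> vnz hr; rewrite /hom rmorph_sum horner_coef (size_map_inj_poly tf_inj (rmorph0 _)).
rewrite mulr_sumr; apply: eq_bigr => i _.
have hi : (i <= N)%N by have := ltn_ord i; lia.
rewrite coef_map !rmorphM !rmorphXn /= expr_div_n.
have tvnz : tf v != 0 by rewrite tofrac_eq0.
have e : tf v ^+ N = tf v ^+ (N - i) * tf v ^+ i by rewrite -exprD subnK.
rewrite e; apply: fld_aux; exact: expf_neq0.
Qed.

Lemma pow_div (P : {poly A}) (u v : A) : P \is monic -> v != 0 ->
  root (map_poly tf P) (tf u / tf v) ->
  forall j, exists h : A, v ^+ (size P).-1 * u ^+ j = h * v ^+ j.
Proof.
move=> mP vnz hroot j.
have eq := Pdiv.RingMonic.rdivp_eq mP 'X^j.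
set q := Pdiv.Ring.rdivp _ _ in eq; set r := Pdiv.Ring.rmodp _ _ in eq.
have hr : (size r < size P)%N by apply: Pdiv.Ring.ltn_rmodpN0; rewrite monic_neq0.
have sP : (0 < size P)%N by rewrite size_poly_gt0 monic_neq0.
exists (hom (size P).-1 u v r).
apply: tf_inj; rewrite !rmorphM /= (homE _ _ _ _ vnz); last by rewrite prednK // ltnW.
have := congr1 (fun p => (map_poly tf p).[tf u / tf v]) eq.
rewrite /= rmorphD rmorphM /= hornerD hornerM (rootP hroot) mulr0 add0r.
rewrite map_polyXn hornerXn => <-.
have tvnz : tf v != 0 by rewrite tofrac_eq0.
rewrite !rmorphXn /= expr_div_n -mulrA divfK //; exact: expf_neq0.
Qed.

Lemma mleadXn (p : A) (i : nat) : p != 0 -> mlead (p ^+ i) = (mlead p *+ i)%MM.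
Proof. by move=> pnz; apply: mleadX_proper; apply: mulfI; rewrite mleadc_eq0. Qed.

Lemma mnm_le_mdeg (m : 'X_{1..n}) l : (m l <= mdeg m)%N.
Proof. by rewrite mdegE (bigD1 l) //= leq_addr. Qed.

Lemma lead_le (P : {poly A}) (u v : A) : P \is monic -> v != 0 -> u != 0 ->
  root (map_poly tf P) (tf u / tf v) -> (mlead v <= mlead u)%MM.
Proof.
move=> mP vnz unz hroot.
set N := (size P).-1.
set j := (N * mdeg (mlead v)).+1.
have [h eh] := pow_div P u v mP vnz hroot j; rewrite -/N in eh.
have lnz : v ^+ N * u ^+ j != 0 by rewrite mulf_neq0 // expf_neq0.
have hnz : h != 0 by move: lnz; rewrite eh; apply: contra => /eqP->; rewrite mul0r.
have := congr1 (@mlead n k) eh.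
rewrite !mleadM ?expf_neq0 // !mleadXn // => /mnmP eq.
apply/mnm_lepP => l; have := eq l; rewrite !mnmDE !mulmnE => el.
case: (leqP (mlead v l) (mlead u l)) => // hlt; exfalso.
have h1 : ((mlead u l).+1 * j <= mlead v l * j)%N by rewrite leq_mul2r hlt orbT.
have h2 : (mlead v l * N <= mdeg (mlead v) * N)%N by rewrite leq_mul2r mnm_le_mdeg orbT.
rewrite mulSn in h1.
have h3 : (mdeg (mlead v) * N < j)%N by rewrite /j mulnC.
clearbody N j; lia.
Qed.

Lemma int_closed (v : A) : v != 0 -> forall (u : A) (P : {poly A}), P \is monic ->
  root (map_poly tf P) (tf u / tf v) -> exists w, u = w * v.
Proof.
move=> vnz.
suff H : forall m (u : A) (P : {poly A}), mlead u = m -> P \is monic ->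
   root (map_poly tf P) (tf u / tf v) -> exists w, u = w * v.
  by move=> u P; apply: (H (mlead u)).
elim/(well_founded_induction (@ltom_wf n)) => m IH u P hm mP hroot.
case: (eqVneq u 0) => [->|unz]; first by exists 0; rewrite mul0r.
have hle := lead_le P u v mP vnz unz hroot.
have cu : mleadc u != 0 by rewrite mleadc_eq0.
have cv : mleadc v != 0 by rewrite mleadc_eq0.
set c := mleadc u / mleadc v.
have cnz : c != 0 by rewrite mulf_neq0 // invr_eq0.
set w0 : A := c *: 'X_[mlead u - mlead v].
have lw0 : mlead w0 = (mlead u - mlead v)%MM.
  rewrite /w0 mleadZ_proper; first exact: mleadXm. have e : mlead ('X_[mlead u - mlead v] : A) = (mlead u - mlead v)%MM by exact: mleadXm. by rewrite e mcoeffX eqxx mulr1.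
have cw0 : mleadc w0 = c by rewrite lw0 /w0 mcoeffZ mcoeffX eqxx mulr1.
have w0nz : w0 != 0 by rewrite -mleadc_eq0 cw0.
have lq : mlead (w0 * v) = mlead u by rewrite mleadM // lw0 submK.
have cq : (w0 * v)@_(mlead u) = mleadc u.
  by rewrite -{1}lq mleadM // mleadcM cw0 /c divfK.
set u' := u - w0 * v.
case: (eqVneq u' 0) => [u'0|u'nz].
  by exists w0; apply/eqP; rewrite -subr_eq0 -/u' u'0.
have hlt : (mlead u' < mlead u)%O.
  have h1 : (mlead u' <= mlead u)%O.
    by have := mleadB_le u (w0 * v); rewrite lq joinxx.
  rewrite lt_neqAle h1 andbT; apply/eqP => he.
  have := mleadc_eq0 u'; rewrite (negbTE u'nz) he /u' mcoeffB cq subrr eqxx //.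
set P' := P \Po ('X + w0%:P).
have mP' : P' \is monic.
  rewrite monicE /P' lead_coef_comp ?size_XaddC // lead_coefXaddC expr1n mulr1.
  exact: mP.
have tvnz : tf v != 0 by rewrite tofrac_eq0.
have hroot' : root (map_poly tf P') (tf u' / tf v).
  rewrite /P' map_comp_poly rmorphD /= map_polyX map_polyC /= rootE horner_comp hornerD hornerX hornerC.
  suff -> : tf u' / tf v + tf w0 = tf u / tf v by [].
  rewrite /u' rmorphB rmorphM /= mulrBl mulfK // subrK //.
have [w' hw'] := IH (mlead u') (ltac:(by rewrite -hm)) u' P' erefl mP' hroot'.
by exists (w' + w0); rewrite mulrDl -hw' /u' subrK.
Qed.

End IntClosed.

Section Val.
Context {k : fieldType} (n : nat).
Local Notation A := {mpoly k[n]}.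
Context (l : 'X_{1..n} -> int).
Hypothesis l_add : forall m1 m2, l (m1 + m2)%MM = l m1 + l m2.

Definition lowb (al : int) (f : A) := forall m, m \in msupp f -> al <= l m.

Lemma lowb_mono al al' f : al' <= al -> lowb al f -> lowb al' f.
Proof. by move=> h hf m hm; apply: le_trans h (hf m hm). Qed.

Lemma lowb0 al : lowb al 0.
Proof. by move=> m; rewrite msupp0. Qed.

Lemma lowb_add al f g : lowb al f -> lowb al g -> lowb al (f + g).
Proof. by move=> hf hg m /msuppD_le; rewrite mem_cat => /orP[/hf|/hg]. Qed.

Lemma lowb_opp al f : lowb al f -> lowb al (- f).
Proof. by move=> hf m; rewrite (perm_mem (msuppN f)); apply: hf. Qed.

Lemma lowb_sum al (I : Type) (r : seq I) (F : I -> A) :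
  (forall i, lowb al (F i)) -> lowb al (\sum_(i <- r) F i).
Proof.
move=> h; elim: r => [|x r IH]; first by rewrite big_nil; apply: lowb0.
by rewrite big_cons; apply: lowb_add.
Qed.

Lemma lowb_mul al be f g : lowb al f -> lowb be g -> lowb (al + be) (f * g).
Proof.
move=> hf hg m /msuppM_le /allpairsP [[m1 m2] /= [h1 h2 ->]].
by rewrite l_add lerD // ?hf ?hg.
Qed.

Lemma coef_sumX (s : seq 'X_{1..n}) (c : 'X_{1..n} -> k) m' : uniq s ->
  (\sum_(m <- s) c m *: 'X_[m] : A)@_m' = if m' \in s then c m' else 0.
Proof.
move=> us; rewrite raddf_sum /=.
case: ifP => hin.
- rewrite (bigD1_seq m') //= mcoeffZ mcoeffX eqxx mulr1 big1_seq ?addr0 //.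
  by move=> m /andP[hne _]; rewrite mcoeffZ mcoeffX (negbTE hne) mulr0.
- rewrite big1_seq // => m /andP[_ hm]; rewrite mcoeffZ mcoeffX.
  by case: eqVneq hm => [->|]; rewrite ?hin ?mulr0.
Qed.

Definition res (Q : pred 'X_{1..n}) (f : A) : A :=
  \sum_(m <- msupp f) (if Q m then f@_m else 0) *: 'X_[m].

Lemma res_coef Q f m : (res Q f)@_m = if Q m then f@_m else 0.
Proof.
rewrite /res coef_sumX ?msupp_uniq //.
case: ifP => // /negbT hm; case: ifP => // _; apply/esym/eqP; by rewrite mcoeff_eq0.
Qed.

Lemma res_split Q f : f = res Q f + res (predC Q) f.
Proof.
by apply/mpolyP => m; rewrite mcoeffD !res_coef /=; case: (Q m); rewrite ?addr0 ?add0r.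
Qed.

Lemma msupp_res Q f m : m \in msupp (res Q f) -> Q m && (m \in msupp f).
Proof.
rewrite !mcoeff_msupp res_coef; case: (Q m) => //; by rewrite eqxx.
Qed.

Definition attains (al : int) (f : A) := exists2 m, m \in msupp f & l m = al.

Lemma prod_min al be f g : lowb al f -> attains al f -> lowb be g -> attains be g ->
  attains (al + be) (f * g).
Proof.
move=> hf [m0 hm0 e0] hg [n0 hn0 e0'].
pose Qa := fun m => l m == al; pose Qb := fun m => l m == be.
set f1 := res Qa f; set f2 := res (predC Qa) f.
set g1 := res Qb g; set g2 := res (predC Qb) g.
have f1nz : f1 != 0.
  apply/eqP => /(congr1 (mcoeff m0)); rewrite res_coef /Qa e0 eqxx mcoeff0 => /eqP.
  by rewrite mcoeff_eq0 hm0.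
have g1nz : g1 != 0.
  apply/eqP => /(congr1 (mcoeff n0)); rewrite res_coef /Qb e0' eqxx mcoeff0 => /eqP.
  by rewrite mcoeff_eq0 hn0.
have hf1 : forall m, m \in msupp f1 -> l m = al by move=> m /msupp_res /andP[/eqP].
have hg1 : forall m, m \in msupp g1 -> l m = be by move=> m /msupp_res /andP[/eqP].
have lf2 : lowb (al + 1) f2.
  move=> m /msupp_res /andP[hq hm]; have := hf m hm; move: hq; rewrite /= /Qa.
  by move=> hne hle; rewrite lezD1 lt_neqAle eq_sym hne.
have lg2 : lowb (be + 1) g2.
  move=> m /msupp_res /andP[hq hm]; have := hg m hm; move: hq; rewrite /= /Qb.
  by move=> hne hle; rewrite lezD1 lt_neqAle eq_sym hne.
have p1nz : f1 * g1 != 0 by rewrite mulf_neq0.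
have hM := mlead_supp p1nz; set M := mlead (f1 * g1) in hM.
have lM : l M = al + be.
  by move: hM => /msuppM_le /allpairsP [[m1 m2] /= [h1 h2 ->]]; rewrite l_add hf1 // hg1.
have rest : lowb (al + be + 1) (f1 * g2 + f2 * g).
  apply: lowb_add.
  - apply: (lowb_mono (al + (be + 1))); first by rewrite addrA.
    apply: lowb_mul => // m hm; by rewrite hf1.
  - apply: (lowb_mono ((al + 1) + be)); first by rewrite addrAC.
    by apply: lowb_mul.
have : M \notin msupp (f1 * g2 + f2 * g).
  apply/negP => /rest; rewrite lM; by rewrite lezD1 ltxx.
rewrite -mcoeff_eq0 => /eqP h0.
exists M => //.
have -> : f * g = f1 * g1 + (f1 * g2 + f2 * g).
  by rewrite {1}(res_split Qa f) -/f1 -/f2 mulrDl {1}(res_split Qb g) -/g1 -/g2 mulrDr addrA.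
by rewrite mcoeff_msupp mcoeffD h0 addr0 -mcoeff_msupp.
Qed.

Lemma l0 : l 0%MM = 0.
Proof. have := l_add 0%MM 0%MM; rewrite addm0; lia. Qed.

Lemma exists_lmin (s : seq 'X_{1..n}) : s != [::] ->
  exists2 x, x \in s & forall y, y \in s -> l x <= l y.
Proof.
elim: s => [//|x s IH] _.
case: (eqVneq s [::]) => [->|hs].
  by exists x; rewrite ?inE ?eqxx // => y; rewrite inE => /eqP ->.
have [z hz hmin] := IH hs.
case: (leP (l x) (l z)) => hxz.
- exists x; first by rewrite inE eqxx.
  move=> y; rewrite inE => /orP[/eqP->//|/hmin hy]; exact: le_trans hxz hy.
- exists z; first by rewrite inE hz orbT.
  move=> y; rewrite inE => /orP[/eqP->|]; [exact: ltW | exact: hmin].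
Qed.

Lemma int_val (P : {poly A}) (w : A) : P \is monic -> P.[w] = 0 ->
  (forall i, lowb 0 P`_i) -> lowb 0 w.
Proof.
move=> mP hroot hcoef.
case: (eqVneq w 0) => [->|wnz]; first exact: lowb0.
have [M0 hM0 hmin] := exists_lmin (msupp w) (ltac:(by rewrite msupp_eq0)).
case: (lerP 0 (l M0)) => hnu.
  by move=> m hm; apply: le_trans hnu (hmin m hm).
set nu := l M0 in hnu hmin.
have pw : forall j, lowb (nu *+ j) (w ^+ j) /\ attains (nu *+ j) (w ^+ j).
  elim => [|j [IH1 IH2]].
    rewrite expr0 mulr0n; split.
      by move=> m; rewrite msupp1 inE => /eqP ->; rewrite l0.
    by exists 0%MM; rewrite ?msupp1 ?inE ?l0.
  rewrite exprS mulrS; split.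
    by apply: lowb_mul; [exact: hmin | exact: IH1].
  by apply: prod_min; [exact: hmin | exists M0 | exact: IH1 | exact: IH2].
set N := (size P).-1.
have sP : size P = N.+1 by rewrite /N prednK // size_poly_gt0 monic_neq0.
have : P.[w] = \sum_(i < N) P`_i * w ^+ i + w ^+ N.
  rewrite horner_coef sP big_ord_recr /=.
  by have := monicP mP; rewrite lead_coefE sP /= => ->; rewrite mul1r.
rewrite hroot => h0; have hwN : w ^+ N = - \sum_(i < N) P`_i * w ^+ i by apply/eqP; rewrite -addr_eq0 addrC -h0.
have [[Mst hMst eMst]] := (pw N).2.
have lr : lowb (nu *+ N + 1) (- \sum_(i < N) P`_i * w ^+ i).
  apply: lowb_opp; apply: lowb_sum => i.
  apply: (lowb_mono (0 + nu *+ i)); last first.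
    by apply: lowb_mul => //; exact: (pw i).1.
  have hi := ltn_ord i.
  move: (nat_of_ord i) hi => i0 hi0.
  have -> : N = ((N - i0.+1).+1 + i0)%N by lia.
  rewrite add0r mulrnDr mulrS.
  have h1 : nu *+ (N - i0.+1) <= 0 by apply: mulrn_wle0; exact: ltW.
  lia.
move: hMst; rewrite hwN => /lr; rewrite eMst.
by rewrite lezD1 ltxx.
Qed.

End Val.

Section Sat.
Context (d : nat) (a : nat -> nat).
Hypothesis ha0 : a 0%N = 0%N.
Hypothesis ha : forall i, (i < d)%N -> (a i < a i.+1)%N.
Hypothesis hb : forall i, (1 <= i)%N -> (i < d)%N -> (bdiff a i <= bdiff a i.+1)%N.

Definition cc (i : nat) : nat := (bdiff a i * (d - i) + a i)%N.

Lemma phi_cone (m : 'X_{1..d.+3}) i : (1 <= i <= d)%N ->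
  (cc i * phi d a m (inord 2) <= bdiff a i * phi d a m (inord 0) + phi d a m (inord 1))%N.
Proof.
move=> hi; rewrite phiX phiY phiD mulnDr.
set b := bdiff a i.
have h : (cc i * \sum_(j < d.+1) E d m j <= b * \sum_(j < d.+1) (d - j) * E d m j + \sum_(j < d.+1) a j * E d m j)%N.
  rewrite !big_distrr -big_split /=; apply: leq_sum => j _.
  have := convex d a ha hb i j hi (ltac:(have := ltn_ord j; lia)).
  rewrite /cc -/b mulnA -mulnDl => hc; rewrite leq_mul2r hc orbT //.
lia.
Qed.

Lemma saturation (M : 'X_{1..3}) :
  (forall i, (1 <= i <= d)%N -> (cc i * M (inord 2) <= bdiff a i * M (inord 0) + M (inord 1))%N) ->
  exists m, phi d a m = M.
Proof.
move=> hM.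
set X := M (inord 0); set Y := M (inord 1); set D := M (inord 2).
case: (leqP (d * D) X) => hX.
  exists (U_(inord 0) *+ (X - d * D) + U_(inord 1) *+ Y + U_(inord 2) *+ D)%MM.
  rewrite !phi_add !phi_muln !phi_U img_0 img_1 (img_x d a 0) // ha0.
  apply: mnm3P; rewrite !(mnmDE, mulmnE, u3E) //= -/X -/Y -/D; lia.
have Dpos : (0 < D)%N by case: (posnP D) hX => // ->; rewrite muln0.
have dpos : (0 < d)%N by case: (posnP d) hX => // ->.
set q0 := (X %/ D)%N; set p := (X %% D)%N.
have hXe : X = (q0 * D + p)%N by rewrite /q0 /p -divn_eq.
have hp : (p < D)%N by rewrite /p ltn_mod.
have hq : (q0 < d)%N by rewrite /q0 ltn_divLR.
set c := (d - q0.+1)%N.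
have hc1 := hM c.+1 (ltac:(lia)).
have hstep := a_step d a ha c.+1 (ltac:(lia)).
rewrite /= in hstep.
set b := bdiff a c.+1 in hc1 hstep.
set r := (D - p)%N.
have hDr : D = (p + r)%N by lia.
have hcc : cc c.+1 = (b * q0 + a c.+1)%N by rewrite /cc -/b; congr (_ * _ + _)%N; lia.
rewrite -/X -/Y -/D hcc hDr hXe in hc1.
have hY : (a c * p + a c.+1 * r <= Y)%N.
  rewrite hstep; nia.
exists (U_(inord 1) *+ (Y - (a c * p + a c.+1 * r)) + U_(inord c.+2) *+ p + U_(inord c.+3) *+ r)%MM.
rewrite !phi_add !phi_muln !phi_U img_1 (img_x d a c) ?(img_x d a c.+1); try lia.
apply: mnm3P; rewrite !(mnmDE, mulmnE, u3E) //= -/X -/Y -/D.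
- rewrite hXe hDr (_ : (d - c = q0.+1)%N); last by lia.
  rewrite (_ : (d - c.+1 = q0)%N); last by lia.
  nia.
- lia.
- lia.
Qed.

End Sat.

Section Normal.
Context {k : fieldType} (d : nat) (a : nat -> nat).
Hypothesis ha0 : a 0%N = 0%N.
Hypothesis ha : forall i, (i < d)%N -> (a i < a i.+1)%N.
Hypothesis hb : forall i, (1 <= i)%N -> (i < d)%N -> (bdiff a i <= bdiff a i.+1)%N.
Local Notation A := {mpoly k[3]}.
Local Notation tf := (@FracField.tofrac A).

Definition lval (i : nat) (M : 'X_{1..3}) : int :=
  (bdiff a i * M (inord 0) + M (inord 1))%N%:Z - (cc d a i * M (inord 2))%N%:Z.

Lemma lval_add i m1 m2 : lval i (m1 + m2)%MM = lval i m1 + lval i m2.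
Proof. rewrite /lval !mnmDE; lia. Qed.

Lemma rees0 : rees (k:=k) d a 0.
Proof. by exists 0; rewrite /psi comp_mpoly0. Qed.
Lemma reesD s t : rees (k:=k) d a s -> rees d a t -> rees d a (s + t).
Proof. by move=> [q ->] [q' ->]; exists (q + q'); rewrite /psi comp_mpolyD. Qed.
Lemma reesZ c s : rees (k:=k) d a s -> rees d a (c *: s).
Proof. by move=> [q ->]; exists (c *: q); rewrite /psi comp_mpolyZ. Qed.

Lemma rees_lowb i s : (1 <= i <= d)%N -> rees (k:=k) d a s -> lowb 3 (lval i) 0 s.
Proof.
move=> hi [q ->]; rewrite psiE; apply: lowb_sum => m M.
move/msuppZ_le; rewrite msuppX inE => /eqP ->.
have := phi_cone d a ha0 ha hb m i hi; rewrite /lval subr_ge0 lez_nat; lia.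
Qed.

Lemma normal_main : normal_subring (rees (k:=k) d a).
Proof.
move=> z [u [v [ru rv vnz ->]]] [p [mp hcoef hroot]].
have ex : forall i, exists s : A, p`_i == tf s.
  by move=> i; have [s [_ hs]] := hcoef i; exists s; rewrite hs.
pose cs i := xchoose (ex i).
have csE : forall i, p`_i = tf (cs i) by move=> i; apply/eqP; exact: (xchooseP (ex i)).
have csR : forall i, rees d a (cs i).
  move=> i; have [s [rs hs]] := hcoef i.
  by have := csE i; rewrite hs => /tf_inj <-.
pose PA : {poly A} := \poly_(i < size p) cs i.
have hmap : map_poly tf PA = p.
  apply/polyP => i; rewrite coef_map coef_poly.
  case: ltnP => hi; first by rewrite csE.
  by rewrite raddf0 nth_default.
have mPA : PA \is monic.
  have := mp; rewrite -hmap !monicE lead_coef_map_inj ?rmorph0 //; last exact: tf_inj.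
  by rewrite -(rmorph1 tf) tofrac_eq.
have rootA : root (map_poly tf PA) (tf u / tf v) by rewrite hmap.
have [w hw] := int_closed 3 v vnz u PA mPA rootA.
have tvnz : tf v != 0 by rewrite tofrac_eq0.
have zw : tf u / tf v = tf w by rewrite hw rmorphM /= mulfK.
exists w; split => //.
have PAw : PA.[w] = 0.
  apply: tf_inj; rewrite rmorph0 -horner_map /= hmap -zw; exact/rootP.
have coefR : forall i, rees d a PA`_i.
  by move=> i; rewrite coef_poly; case: ltnP => _; [exact: csR | exact: rees0].
have lw : forall i, (1 <= i <= d)%N -> lowb 3 (lval i) 0 w.
  move=> i hi; apply: (int_val 3 (lval i) (lval_add i) PA w mPA PAw).
  by move=> j; apply: rees_lowb.
have hsupp : forall M, M \in msupp w -> exists m, phi d a m = M.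
  move=> M hM; apply: (saturation d a ha0 ha) => i hi.
  have := lw i hi M hM; rewrite /lval subr_ge0 lez_nat; lia.
rewrite (mpolyE w).
elim: (msupp w) hsupp => [|M s IH] hs; first by rewrite big_nil; exact: rees0.
rewrite big_cons; apply: reesD; last by apply: IH => M' hM'; apply: hs; rewrite inE hM' orbT.
have [m hm] := hs M (mem_head _ _).
by apply: reesZ; exists 'X_[m]; rewrite psiX hm.
Qed.

End Normal.

Theorem proposition6p2 (k : closedFieldType) (Hchar : [pchar k] =i pred0)
  (d : nat) (a : nat -> nat)
  (ha0 : a 0%N = 0%N)
  (ha : forall i, (i < d)%N -> (a i < a i.+1)%N)
  (hb : forall i, (1 <= i)%N -> (i < d)%N -> (bdiff a i <= bdiff a i.+1)%N)
  (le : rel 'X_{1..d.+3}) (hle : term_order le)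
  (hin1 : forall i, (1 <= i)%N -> (i <= d)%N ->
     ltT le (my d *+ bdiff a i + mT d i.-1)%MM (mx d + mT d i)%MM)
  (hin2 : forall i j, (1 <= j)%N -> (j < i)%N -> (i <= d)%N ->
     ltT le (my d *+ (bdiff a i - bdiff a j) + mT d i.-1 + mT d j)%MM
            (mT d i + mT d j.-1)%MM) :
  groebner_basis le (kerpsi (k := k) d a) (gensH (k := k) d a)
  /\ normal_subring (rees (k := k) d a).
Proof.
split.
- exact: (groebner_main d a ha hb le hle hin1 hin2).
- exact: (normal_main d a ha0 ha hb).
Qed.
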